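(* For any constant $C>0$, there exists no (possibly randomized) algorithm for the classical secretary problem with predictions (in the random order model) whose competitive ratio is better than $\max\{1-C\epsilon, 0.348\}$, where $\epsilon$ is the largest multiplicative prediction error of the instance. That is, there is no randomized algorithm such that for every instance $I$, its ratio $r(I)$ satisfies both $r(I) \ge 1 - C\epsilon(I)$ and $r(I) > 0.348$.
   Context: Classical secretary problem with predictions (random order model): there are $n$ candidates $N=\{1,\dots,n\}$, each with an actual value $v(i)>0$ and a predicted value $\hat v(i)\ge 0$; all predicted values (and $n$) are known to the algorithm in advance. The candidates arrive in an order drawn uniformly at random from all $n!$ permutations; upon arrival of a candidate the algorithm learns its index and actual value and must irrevocably decide whether to hire it; at most one candidate may be hired. The algorithm may use internal randomness. For an instance $I$, $\epsilon(I)=\max_{i\in N}|1-\hat v(i)/v(i)|$, and the ratio $r(I)$ of an algorithm is the expected value (over the random order and the algorithm's randomness) of the hired candidate (0 if none) divided by $\max_{i\in N} v(i)$. *)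

(* Defs.v *)
From HB Require Import structures.
From mathcomp Require Import all_boot all_order all_algebra all_fingroup.
From mathcomp Require Import reals.
Set Implicit Arguments. Unset Strict Implicit. Unset Printing Implicit Defensive.
Import Order.TTheory GRing.Theory Num.Theory.
Local Open Scope ring_scope.

(* A (possibly randomized) online algorithm, in behavioural form: given n,
   the predicted values vhat, and the history of arrived candidates
   (index, actual value), in arrival order, whose LAST entry is the
   candidate currently being interviewed, it returns the probability with
   which it hires the current candidate (conditionally on not having hired
   anybody yet). *)
Definition algorithm (R : realType) :=
  forall n : nat, ('I_n -> R) -> seq ('I_n * R) -> R.

Definition valid_algorithm (R : realType) (A : algorithm R) : Prop :=
  forall n (vhat : 'I_n -> R) (h : seq ('I_n * R)), 0 <= A n vhat h <= 1.

(* Expected value collected from the remaining arrivals [rest], given the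
   history [hist] and that no candidate has been hired so far. *)
Fixpoint gain (R : realType) (A : algorithm R) (n : nat) (vhat v : 'I_n -> R)
    (hist : seq ('I_n * R)) (rest : seq 'I_n) : R :=
  match rest with
  | [::] => 0
  | i :: rest' =>
      let h := rcons hist (i, v i) in
      A n vhat h * v i + (1 - A n vhat h) * gain A vhat v h rest'
  end.

(* Expected value of the hired candidate, the arrival order being uniform
   over all n! permutations (sigma t = candidate arriving at time t). *)
Definition expected_value (R : realType) (A : algorithm R) (n : nat)
    (v vhat : 'I_n -> R) : R :=
  (n`!%:R)^-1 * \sum_(s : {perm 'I_n}) gain A vhat v [::] [seq s t | t <- enum 'I_n].

Definition maxv (R : realType) (n : nat) (v : 'I_n -> R) : R :=
  \big[Num.max/0]_(i < n) v i.

Definition alg_ratio (R : realType) (A : algorithm R) (n : nat) (v vhat : 'I_n -> R) : R :=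
  expected_value A v vhat / maxv v.

Definition pred_error (R : realType) (n : nat) (v vhat : 'I_n -> R) : R :=
  \big[Num.max/0]_(i < n) `|1 - vhat i / v i|.

(* Main.v *)
Require Import Defs.
From HB Require Import structures.
From mathcomp Require Import all_boot all_order all_algebra all_fingroup.
From mathcomp Require Import reals.
From mathcomp Require Import lra.
Import Order.TTheory GRing.Theory Num.Theory.
Local Open Scope ring_scope.

Section Aux.
Variable R : realType.

Definition o0 : 'I_3 := @Ordinal 3 0 isT.
Definition o1 : 'I_3 := @Ordinal 3 1 isT.
Definition o2 : 'I_3 := @Ordinal 3 2 isT.

Lemma enum3 : enum 'I_3 = [:: o0; o1; o2].
Proof. by apply: (inj_map val_inj); rewrite val_enum_ord. Qed.

Lemma sum3 (F : 'I_3 -> R) : \sum_a F a = F o0 + F o1 + F o2.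
Proof.
rewrite !big_ord_recl big_ord0 addr0 addrA.
by congr (F _ + F _ + F _); apply: val_inj.
Qed.

Lemma sum_perm_head (f : 'I_3 -> R) :
  \sum_(s : {perm 'I_3}) f (s o0) = 2%:R * \sum_a f a.
Proof.
have H c : \sum_(s : {perm 'I_3}) f (s o0) = \sum_(s : {perm 'I_3}) f (c + s o0).
  rewrite (reindex_inj (mulIg (perm (addrI c)))) /=.
  by apply: eq_bigr => s _; rewrite permM permE.
have H3 : 3%:R * \sum_(s : {perm 'I_3}) f (s o0) = 6%:R * \sum_a f a.
  have -> : 3%:R = \sum_(c : 'I_3) (1 : R) by rewrite sumr_const card_ord.
  rewrite big_distrl /=.
  rewrite (eq_bigr (fun c : 'I_3 => \sum_(s : {perm 'I_3}) f (c + s o0))); last first.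
    move=> c _; rewrite mul1r; exact (H c).
  rewrite exchange_big /=.
  rewrite (eq_bigr (fun s : {perm 'I_3} => \sum_a f a)); last first.
    by move=> s _; apply: esym; rewrite (reindex_inj (addIr (s o0))); apply: eq_bigr => i _.
  rewrite big_const (_ : #|_| = 6%N); last exact: (card_Sn 3).
  by rewrite /= mulr_natl mulrS !mulrS mulr0n addr0.
apply: (mulfI (_ : 3%:R != 0 :> R)); first by rewrite pnatr_eq0.
by rewrite H3 mulrA -natrM.
Qed.


Lemma gain_ge0 (A : algorithm R) n (vhat v : 'I_n -> R) h rest :
  valid_algorithm A -> (forall k, 0 <= v k) -> 0 <= gain A vhat v h rest.
Proof.
move=> HA Hv; elim: rest h => [|i rest IH] h /=; first by [].
have /andP[a0 a1] := HA n vhat (rcons h (i, v i)).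
apply: addr_ge0; apply: mulr_ge0 => //; first by rewrite subr_ge0.
Qed.

Lemma gain_le (A : algorithm R) n (vhat v : 'I_n -> R) h rest m :
  valid_algorithm A -> 0 <= m -> (forall k, k \in rest -> v k <= m) ->
  gain A vhat v h rest <= m.
Proof.
move=> HA m0; elim: rest h => [|i rest IH] h /= Hm; first by [].
have /andP[a0 a1] := HA n vhat (rcons h (i, v i)).
have Hi : v i <= m by apply: Hm; rewrite inE eqxx.
have Hr : gain A vhat v (rcons h (i, v i)) rest <= m.
  by apply: IH => k kr; apply: Hm; rewrite inE kr orbT.
have -> : m = A n vhat (rcons h (i, v i)) * m + (1 - A n vhat (rcons h (i, v i))) * m.
  by rewrite -mulrDl addrC subrK mul1r.
apply: lerD; first exact: ler_wpM2l.
by apply: ler_wpM2l => //; rewrite subr_ge0.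
Qed.

Lemma gain_perm_le (A : algorithm R) (vhat v m : 'I_3 -> R) (s : {perm 'I_3}) :
  valid_algorithm A -> (forall a, 0 <= m a) ->
  (forall a k, k != a -> v k <= m a) ->
  gain A vhat v [::] [seq s t | t <- enum 'I_3] <=
  A 3 vhat [:: (s o0, v (s o0))] * v (s o0) +
  (1 - A 3 vhat [:: (s o0, v (s o0))]) * m (s o0).
Proof.
move=> HA m0 Hm.
have -> : gain A vhat v [::] [seq s t | t <- enum 'I_3] =
  A 3 vhat [:: (s o0, v (s o0))] * v (s o0) +
  (1 - A 3 vhat [:: (s o0, v (s o0))]) *
  gain A vhat v [:: (s o0, v (s o0))] [:: s o1; s o2] by rewrite enum3.
have /andP[a0 a1] := HA 3 vhat [:: (s o0, v (s o0))].
apply: lerD => //; apply: ler_wpM2l; first by rewrite subr_ge0.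
apply: gain_le => // k; rewrite !inE => /orP[] /eqP ->; apply: Hm;
  by rewrite (inj_eq perm_inj).
Qed.

Lemma maxv_ge n (v : 'I_n -> R) i : v i <= maxv v.
Proof. by rewrite /maxv (bigD1 i) //= le_max lexx. Qed.

Lemma pred_error_0 n (v : 'I_n -> R) : (forall i, v i != 0) -> pred_error v v = 0.
Proof.
move=> Hv; rewrite /pred_error.
elim/big_rec: _ => // i x _ ->.
by rewrite divff // subrr normr0 maxxx.
Qed.

Definition vh : 'I_3 -> R := fun k => if k == o0 then 2 else 1.

Lemma sum_gain_le (A : algorithm R) (v m : 'I_3 -> R) :
  valid_algorithm A -> (forall a, 0 <= m a) ->
  (forall a k, k != a -> v k <= m a) ->
  \sum_(s : {perm 'I_3}) gain A vh v [::] [seq s t | t <- enum 'I_3] <=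
  2%:R * ((A 3 vh [:: (o0, v o0)] * v o0 + (1 - A 3 vh [:: (o0, v o0)]) * m o0) +
          (A 3 vh [:: (o1, v o1)] * v o1 + (1 - A 3 vh [:: (o1, v o1)]) * m o1) +
          (A 3 vh [:: (o2, v o2)] * v o2 + (1 - A 3 vh [:: (o2, v o2)]) * m o2)).
Proof.
move=> HA m0 Hm.
rewrite -(sum3 (fun a => A 3 vh [:: (a, v a)] * v a + (1 - A 3 vh [:: (a, v a)]) * m a)).
rewrite -(sum_perm_head (fun a => A 3 vh [:: (a, v a)] * v a + (1 - A 3 vh [:: (a, v a)]) * m a)).
by apply: ler_sum => s _; apply: gain_perm_le.
Qed.

Lemma expected_eq (A : algorithm R) v :
  expected_value A v vh = 6%:R^-1 * \sum_(s : {perm 'I_3}) gain A vh v [::] [seq s t | t <- enum 'I_3].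
Proof. by []. Qed.

Lemma force0 (A : algorithm R) C :
  valid_algorithm A -> 1 - C * pred_error vh vh <= alg_ratio A vh vh ->
  A 3 vh [:: (o0, 2)] = 1.
Proof.
move=> HA H.
rewrite pred_error_0 in H; last by move=> i; rewrite /vh; case: ifP => _; rewrite ?oner_eq0 ?pnatr_eq0.
rewrite mulr0 subr0 /alg_ratio in H.
have M2 : 2 <= maxv vh by have := @maxv_ge 3 vh o0; rewrite /vh eqxx.
have Mp : 0 < maxv vh by apply: lt_le_trans M2.
rewrite ler_pdivlMr // mul1r in H.
have Hs := @sum_gain_le A vh (fun a => if a == o0 then 1 else 2) HA.
have /andP[a0 a1] := HA 3 vh [:: (o0, vh o0)].
have /andP[b0 b1] := HA 3 vh [:: (o1, vh o1)].
have /andP[c0 c1] := HA 3 vh [:: (o2, vh o2)].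
move: Hs a0 a1 b0 b1 c0 c1 H; rewrite expected_eq /vh /=.
move=> Hs a0 a1 b0 b1 c0 c1 H.
have {}Hs := Hs (fun a => ltac:(case: ifP => _; lra)).
have {}Hs := Hs (fun a k nka => ltac:(case: ifP => /eqP ek; case: ifP => /eqP ea; try lra;
  by move: nka; rewrite ek ea eqxx)).
move: Hs H M2; set S := \sum_s _; move=> Hs H M2.
set M := maxv _ in H M2.
lra.
Qed.

Lemma step (A : algorithm R) :
  valid_algorithm A -> A 3 vh [:: (o0, 2)] = 1 ->
  (forall v : 'I_3 -> R, (forall i, 0 < v i) -> 348%:R / 1000%:R < alg_ratio A v vh) ->
  forall (oi oj : 'I_3) (x y : R),
  (oi == o1) && (oj == o2) || (oi == o2) && (oj == o1) ->
  2 <= y -> 1000%:R * y <= x ->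
  A 3 vh [:: (oj, y)] + 41%:R / 1000%:R < A 3 vh [:: (oi, x)].
Proof.
move=> HA Ha Hrob oi oj x y Hij hy hx.
pose v := fun k : 'I_3 => if k == o0 then 2 else if k == oi then x else y.
pose m := fun k : 'I_3 => if k == oi then y else x.
have Hs := @sum_gain_le A v m HA.
have Hr := Hrob v (fun k => ltac:(rewrite /v; case: ifP => _; [|case: ifP => _]; lra)).
have Mx : x <= maxv v.
  have := @maxv_ge 3 v oi; rewrite /v.
  by case/orP: Hij => /andP[/eqP -> _].
move: Hr; rewrite /alg_ratio expected_eq.
have Mp : 0 < maxv v by lra.
rewrite ltr_pdivlMr // => Hr.
have /andP[b0 b1] := HA 3 vh [:: (oi, x)].
have /andP[c0 c1] := HA 3 vh [:: (oj, y)].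
have {}Hs := Hs (fun a => ltac:(rewrite /m; case: ifP => _; lra)).
have {}Hs := Hs (fun a k nka => ltac:(rewrite /v /m; case: ifP => /eqP ek; 
  [case: ifP => _; lra|]; case: ifP => /eqP ei; case: ifP => /eqP ea; try lra;
  by move: nka; rewrite ei ea eqxx)).
move: Hs Hr; set S := \sum_s _; move=> Hs Hr.
case/orP: Hij => /andP[/eqP Ei /eqP Ej]; subst oi oj; move: Hs; rewrite /v /m /= Ha => Hs.
- rewrite ltNge; apply/negP => Hle.
  have h1 : (A 3 vh [:: (o1, x)] - A 3 vh [:: (o2, y)]) * x <= 41%:R / 1000%:R * x.
    by apply: ler_wpM2r; lra.
  have h2 : (A 3 vh [:: (o2, y)] - A 3 vh [:: (o1, x)]) * y <= y.
    by rewrite -[X in _ <= X]mul1r; apply: ler_wpM2r; lra.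
  nra.
- rewrite ltNge; apply/negP => Hle.
  have h1 : (A 3 vh [:: (o2, x)] - A 3 vh [:: (o1, y)]) * x <= 41%:R / 1000%:R * x.
    by apply: ler_wpM2r; lra.
  have h2 : (A 3 vh [:: (o1, y)] - A 3 vh [:: (o2, x)]) * y <= y.
    by rewrite -[X in _ <= X]mul1r; apply: ler_wpM2r; lra.
  nra.
Qed.

End Aux.

Arguments vh {R}.

Theorem theorem3 (R : realType) (C : R) :
  0 < C ->
  ~ (exists A : algorithm R,
       valid_algorithm A /\
       forall (n : nat) (v vhat : 'I_n -> R),
         (0 < n)%N ->
         (forall i, 0 < v i) ->
         (forall i, 0 <= vhat i) ->
         1 - C * pred_error v vhat <= alg_ratio A v vhat /\
         348%:R / 1000%:R < alg_ratio A v vhat).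
Proof.
move=> hC [A [HA H]].
have vhp : forall i : 'I_3, 0 < @vh R i by move=> i; rewrite /vh; case: ifP => _; lra.
have vhn : forall i : 'I_3, 0 <= @vh R i by move=> i; apply: ltW.
have Ha : A 3 vh [:: (o0, 2)] = 1.
  exact: (@force0 R A C HA (H 3 vh vh isT vhp vhn).1).
have Hrob : forall v : 'I_3 -> R, (forall i, 0 < v i) -> 348%:R / 1000%:R < alg_ratio A v vh.
  by move=> v hv; exact: (H 3 v vh isT hv vhn).2.
pose o k := if odd k then o1 else o2.
pose val k := 2 * (1000%:R : R) ^+ k.
pose r k := A 3 vh [:: (o k, val k)].
have St k : r k + 41%:R / 1000%:R < r k.+1.
  apply: (@step R A HA Ha Hrob (o k.+1) (o k) (val k.+1) (val k)).
  - by rewrite /o /=; case: (odd k).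
  - rewrite /val; have : 1 <= (1000%:R : R) ^+ k by apply: exprn_ege1; rewrite ler1n.
    lra.
  - by rewrite /val exprS; lra.
have Ind k : k%:R * (41%:R / 1000%:R) <= r k.
  elim: k => [|k IH].
    by rewrite mul0r; have /andP[] := HA 3 vh [:: (o 0%N, val 0%N)].
  rewrite -natr1 mulrDl mul1r; have := St k; lra.
have := Ind 25%N; have /andP[_ r1] := HA 3 vh [:: (o 25%N, val 25%N)].
rewrite -/(r 25%N) in r1; lra.
Qed.
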